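(* The axiom system $PAL_{int}$ is complete with respect to the class of all topo-models: for every formula $\varphi\in\mathcal{L}_{PAL_{int}}$, if $\varphi$ is valid in every topo-model, then $\varphi$ is a theorem of $PAL_{int}$.
   Context: Fix a countable set $\mathit{Prop}$ of propositional variables and a finite non-empty set $\mathcal{A}$ of agents. The language $\mathcal{L}_{PAL_{int}}$ is given by $\varphi ::= p \mid \neg\varphi \mid \varphi\wedge\varphi \mid K_i\varphi \mid \mathrm{int}(\varphi)\mid [\varphi]\varphi$ with $p\in\mathit{Prop}$, $i\in\mathcal{A}$; $\vee,\rightarrow,\leftrightarrow$ are abbreviations, $\bot := p\wedge\neg p$. Topo-models: Let $(X,\tau)$ be a topological space, $\mathrm{Int}$ its interior operator. A neighbourhood function set $\Phi$ on $(X,\tau)$ is a set of partial functions $\theta$ from $X$ to functions $\mathcal{A}\to\tau$ such that for all $x,y\in Dom(\theta)$, $i\in\mathcal{A}$, $U\in\tau$: (1) $\theta(x)(i)\in\tau$; (2) $x\in\theta(x)(i)$; (3) $\theta(x)(i)\subseteq Dom(\theta)$; (4) if $y\in\theta(x)(i)$ then $\theta(x)(i)=\theta(y)(i)$; (5) $\theta|_U\in\Phi$, where $Dom(\theta|_U)=Dom(\theta)\cap U$ and $\theta|_U(x)(i)=\theta(x)(i)\cap U$. A topo-model is $\mathcal{M}=(X,\tau,\Phi,V)$ with $V$ assigning to each $p$ a subset of $X$. A neighbourhood situation is $(x,\theta)$ with $\theta\in\Phi$, $x\in Dom(\theta)$. Semantics: $(x,\theta)\models p$ iff $x\in V(p)$;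 Booleans as usual; $(x,\theta)\models K_i\varphi$ iff $(y,\theta)\models\varphi$ for all $y\in\theta(x)(i)$; $(x,\theta)\models\mathrm{int}(\varphi)$ iff $x\in\mathrm{Int}([\![\varphi]\!]^\theta)$ where $[\![\varphi]\!]^\theta=\{y\in Dom(\theta)\mid (y,\theta)\models\varphi\}$; $(x,\theta)\models[\varphi]\psi$ iff $(x,\theta)\models\mathrm{int}(\varphi)$ implies $(x,\theta^\varphi)\models\psi$, where $\theta^\varphi=\theta|_{\mathrm{Int}([\![\varphi]\!]^\theta)}$. Validity in $\mathcal{M}$ means truth at all neighbourhood situations. The axiom system $PAL_{int}$ has axioms: propositional tautologies; $K_i(\varphi\to\psi)\to(K_i\varphi\to K_i\psi)$; $K_i\varphi\to\varphi$; $K_i\varphi\to K_iK_i\varphi$; $\neg K_i\varphi\to K_i\neg K_i\varphi$; $\mathrm{int}(\varphi\to\psi)\to(\mathrm{int}(\varphi)\to\mathrm{int}(\psi))$; $\mathrm{int}(\varphi)\to\varphi$; $\mathrm{int}(\varphi)\to\mathrm{int}(\mathrm{int}(\varphi))$; $K_i\varphi\to\mathrm{int}(\varphi)$; (R1) $[\varphi]p\leftrightarrow(\mathrm{int}(\varphi)\to p)$; (R2) $[\varphi]\neg\psi\leftrightarrow(\mathrm{int}(\varphi)\to\neg[\varphi]\psi)$; (R3) $[\varphi](\psi\wedge\chi)\leftrightarrow[\varphi]\psi\wedge[\varphi]\chi$; (R4) $[\varphi]\mathrm{int}(\psi)\leftrightarrow(\mathrm{int}(\varphi)\to\mathrm{int}([\varphi]\psi))$;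 (R5) $[\varphi]K_i\psi\leftrightarrow(\mathrm{int}(\varphi)\to K_i[\varphi]\psi)$; (R6) $[\varphi][\psi]\chi\leftrightarrow[\neg[\varphi]\neg\mathrm{int}(\psi)]\chi$; rules: modus ponens, from $\varphi$ infer $K_i\varphi$, from $\varphi$ infer $\mathrm{int}(\varphi)$, from $\varphi$ infer $[\psi]\varphi$. *)

(* Defs.v *)
From mathcomp Require Import all_boot.
From mathcomp Require Import boolp classical_sets topology.

Set Implicit Arguments.
Unset Strict Implicit.
Unset Printing Implicit Defensive.

Local Open Scope classical_set_scope.

Inductive form (P Ag : Type) : Type :=
| Var  : P -> form P Ag
| Neg  : form P Ag -> form P Ag
| And  : form P Ag -> form P Ag -> form P Ag
| K    : Ag -> form P Ag -> form P Ag
| Int  : form P Ag -> form P Ag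
| Ann  : form P Ag -> form P Ag -> form P Ag.   (* Ann phi psi = [phi]psi *)

Arguments Var {P Ag}.
Arguments Neg {P Ag}.
Arguments And {P Ag}.
Arguments K {P Ag}.
Arguments Int {P Ag}.
Arguments Ann {P Ag}.

Definition Imp {P Ag} (a b : form P Ag) : form P Ag := Neg (And a (Neg b)).
Definition Or {P Ag} (a b : form P Ag) : form P Ag := Neg (And (Neg a) (Neg b)).
Definition Iff {P Ag} (a b : form P Ag) : form P Ag := And (Imp a b) (Imp b a).

(* A partial function theta from X to functions Ag -> (subsets of X);
   [None] means "undefined". *)
Definition nfun (X Ag : Type) := X -> option (Ag -> set X).

Definition Dom {X Ag : Type} (theta : nfun X Ag) : set X :=
  [set x | theta x <> None].

Definition restrict {X Ag : Type} (theta : nfun X Ag) (U : set X) : nfun X Ag :=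
  fun x => if pselect (U x) then
             match theta x with
             | Some f => Some (fun i => f i `&` U)
             | None => None
             end
           else None.

Definition nbhd_function_set {X : topologicalType} {Ag : Type}
  (Phi : set (nfun X Ag)) : Prop :=
  forall theta, Phi theta ->
    (forall x f, theta x = Some f -> forall i : Ag,
       [/\ open (f i),
           f i x,
           f i `<=` Dom theta &
           (forall y g, theta y = Some g -> f i y -> f i = g i)])
    /\ (forall U : set X, open U -> Phi (restrict theta U)).

(** * Semantics: sat V phi theta x  means  (x, theta) |= phi *)
Fixpoint sat {X : topologicalType} {P Ag : Type} (V : P -> set X)
  (phi : form P Ag) : nfun X Ag -> X -> Prop :=
  match phi with
  | Var p => fun _ x => V p x
  | Neg a => fun theta x => ~ sat V a theta x
  | And a b => fun theta x => sat V a theta x /\ sat V b theta x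
  | K i a => fun theta x =>
      match theta x with
      | Some f => forall y, f i y -> sat V a theta y
      | None => True
      end
  | Int a => fun theta x =>
      interior [set y | Dom theta y /\ sat V a theta y] x
  | Ann a b => fun theta x =>
      let Ia := interior [set y | Dom theta y /\ sat V a theta y] in
      Ia x -> sat V b (restrict theta Ia) x
  end.

Definition ext {X : topologicalType} {P Ag : Type} (V : P -> set X)
  (phi : form P Ag) (theta : nfun X Ag) : set X :=
  [set y | Dom theta y /\ sat V phi theta y].

Definition valid_in {X : topologicalType} {P Ag : Type}
  (Phi : set (nfun X Ag)) (V : P -> set X) (phi : form P Ag) : Prop :=
  forall theta x, Phi theta -> Dom theta x -> sat V phi theta x.

Definition topo_valid {P Ag : Type} (phi : form P Ag) : Prop :=
  forall (X : topologicalType) (Phi : set (nfun X Ag)) (V : P -> set X),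
    nbhd_function_set Phi -> valid_in Phi V phi.

(* truth-functional evaluation treating K_i, int and [.]-formulas (and
   variables) as atoms; propositional tautologies are the formulas true
   under every such valuation *)
Fixpoint tval {P Ag : Type} (v : form P Ag -> bool) (phi : form P Ag) : bool :=
  match phi with
  | Neg a => ~~ tval v a
  | And a b => tval v a && tval v b
  | _ => v phi
  end.

Definition ptaut {P Ag : Type} (phi : form P Ag) : Prop :=
  forall v : form P Ag -> bool, tval v phi = true.

Inductive thm {P Ag : Type} : form P Ag -> Prop :=
| Ax_taut  phi : ptaut phi -> thm phi
| Ax_K     i a b : thm (Imp (K i (Imp a b)) (Imp (K i a) (K i b)))
| Ax_T     i a : thm (Imp (K i a) a)
| Ax_4     i a : thm (Imp (K i a) (K i (K i a)))
| Ax_5     i a : thm (Imp (Neg (K i a)) (K i (Neg (K i a))))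
| Ax_IntK  a b : thm (Imp (Int (Imp a b)) (Imp (Int a) (Int b)))
| Ax_IntT  a : thm (Imp (Int a) a)
| Ax_Int4  a : thm (Imp (Int a) (Int (Int a)))
| Ax_KInt  i a : thm (Imp (K i a) (Int a))
| Ax_R1    a p : thm (Iff (Ann a (Var p)) (Imp (Int a) (Var p)))
| Ax_R2    a b : thm (Iff (Ann a (Neg b)) (Imp (Int a) (Neg (Ann a b))))
| Ax_R3    a b c : thm (Iff (Ann a (And b c)) (And (Ann a b) (Ann a c)))
| Ax_R4    a b : thm (Iff (Ann a (Int b)) (Imp (Int a) (Int (Ann a b))))
| Ax_R5    i a b : thm (Iff (Ann a (K i b)) (Imp (Int a) (K i (Ann a b))))
| Ax_R6    a b c : thm (Iff (Ann a (Ann b c)) (Ann (Neg (Ann a (Neg (Int b)))) c))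
| R_MP     a b : thm (Imp a b) -> thm a -> thm b
| R_NecK   i a : thm a -> thm (K i a)
| R_NecInt a : thm a -> thm (Int a)
| R_NecAnn b a : thm a -> thm (Ann b a).

(* Main.v *)
Require Import Defs.
From HB Require Import structures.
From mathcomp Require Import all_boot.
From mathcomp Require Import boolp classical_sets topology.
From mathcomp Require Import zify.
Set Implicit Arguments.
Unset Strict Implicit.
Unset Printing Implicit Defensive.
Local Open Scope classical_set_scope.


Lemma NNPP (Q : Prop) : ~ ~ Q -> Q.
Proof. by case: (pselect Q) => // h /(_ h). Qed.

Section Prop_logic.
Variables (P Ag : Type).
Notation F := (form P Ag).

Lemma tval_imp (v : F -> bool) a b : Defs.tval v (Imp a b) = (Defs.tval v a ==> Defs.tval v b).
Proof. by rewrite /= ; case: (Defs.tval v a); case: (Defs.tval v b). Qed.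

Fixpoint imps (l : seq F) (a : F) : F :=
  match l with [::] => a | b :: l => Imp b (imps l a) end.

Lemma tval_imps v l a : Defs.tval v (imps l a) = (all (Defs.tval v) l ==> Defs.tval v a).
Proof.
elim: l => [//|b l IH] /=; rewrite IH.
by case: (Defs.tval v b); case: (all _ l); case: (Defs.tval v a).
Qed.

Lemma thm_sem1 (a b : F) : thm a -> (forall v, Defs.tval v a -> Defs.tval v b) -> thm b.
Proof.
move=> ha H; apply: (R_MP _ ha); apply: Ax_taut => v; rewrite tval_imp.
by apply/implyP; apply: H.
Qed.

Lemma thm_sem2 (a b c : F) : thm a -> thm b ->
  (forall v, Defs.tval v a -> Defs.tval v b -> Defs.tval v c) -> thm c.
Proof.
move=> ha hb H; apply: (R_MP _ hb); apply: (R_MP _ ha).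
apply: Ax_taut => v; rewrite !tval_imp.
by apply/implyP => ?; apply/implyP; apply: H.
Qed.

Lemma thm_sem0 (c : F) : (forall v, Defs.tval v c) -> thm c.
Proof. by move=> H; apply: Ax_taut => v; apply: H. Qed.

Fixpoint allS (G : set F) (l : seq F) : Prop :=
  match l with [::] => True | b :: l => G b /\ allS G l end.

Lemma allS_cat G l1 l2 : allS G (l1 ++ l2) <-> allS G l1 /\ allS G l2.
Proof. elim: l1 => [|b l IH] /=; [tauto| rewrite IH; tauto]. Qed.

Lemma allS_sub (G H : set F) l : G `<=` H -> allS G l -> allS H l.
Proof. by move=> GH; elim: l => [//|b l IH] /= [/GH ? /IH]. Qed.

Definition prov (G : set F) (a : F) := exists l, allS G l /\ thm (imps l a).

Definition cons (G : set F) := forall a, ~ prov G (And a (Neg a)).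

Definition mcs (G : set F) := cons G /\ forall a, G a \/ G (Neg a).

Lemma prov_thm G a : thm a -> prov G a.
Proof. by move=> h; exists [::]. Qed.

Lemma prov_in G a : G a -> prov G a.
Proof.
move=> h; exists [:: a]; split => //; apply: thm_sem0 => v.
by rewrite tval_imps /= andbT implybb.
Qed.

Lemma prov_sem2 G a b c : prov G a -> prov G b ->
  (forall v, Defs.tval v a -> Defs.tval v b -> Defs.tval v c) -> prov G c.
Proof.
move=> [l1 [h1 t1]] [l2 [h2 t2]] H; exists (l1 ++ l2); split.
  by apply/allS_cat.
apply: (thm_sem2 t1 t2) => v; rewrite !tval_imps all_cat.
case: (all _ l1) => //=; case: (all _ l2) => //= ? ?; exact: H.
Qed.

Lemma prov_sem1 G a c : prov G a ->
  (forall v, Defs.tval v a -> Defs.tval v c) -> prov G c.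
Proof. by move=> h H; apply: (prov_sem2 h h) => v ? _; apply: H. Qed.

Lemma prov_sub G H a : G `<=` H -> prov G a -> prov H a.
Proof. by move=> GH [l [hl t]]; exists l; split => //; apply: allS_sub hl. Qed.

Lemma filter_out (S : set F) e l c :
  allS (S `|` [set e]) l -> exists l', allS S l' /\
    forall v, Defs.tval v (imps l c) -> Defs.tval v (imps l' (Imp e c)).
Proof.
elim: l => [|b l IH] /=.
  by move=> _; exists [::]; split => // v; rewrite tval_imp => ->; rewrite implybT.
move=> [hb /IH [l' [hl' H]]].
case: hb => [Sb|->].
  exists (b :: l'); split => // v; have := H v.
  rewrite !tval_imps /=.
  by case: (Defs.tval v b); case: (all _ l); case: (all _ l'); case: (Defs.tval v c); case: (Defs.tval v e).
exists l'; split => // v; have := H v.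
rewrite !tval_imps /=.
by case: (Defs.tval v e); case: (all _ l); case: (all _ l'); case: (Defs.tval v c).
Qed.

Lemma prov_deduct S e c : prov (S `|` [set e]) c -> prov S (Imp e c).
Proof.
move=> [l [hl t]]; have [l' [hl' H]] := filter_out c hl.
by exists l'; split => //; apply: (thm_sem1 t).
Qed.

Lemma cons_contra G x :
  prov G x -> prov G (Neg x) -> ~ cons G.
Proof.
move=> h1 h2 hc; apply: (hc x); apply: (prov_sem2 h1 h2) => v /=.
by move=> -> ->.
Qed.

Section MCS.
Variable G : set F.
Hypothesis hG : mcs G.

Lemma mcs_prov a : prov G a -> G a.
Proof.
move=> h; case: (hG.2 a) => // hn; exfalso.
by apply: (cons_contra h (prov_in hn)); case: hG.
Qed.

Lemma mcs_thm a : thm a -> G a.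
Proof. by move=> h; apply: mcs_prov; apply: prov_thm. Qed.

Lemma mcs_neg a : G (Neg a) <-> ~ G a.
Proof.
split; last by move=> h; case: (hG.2 a).
move=> hn ha; apply: (cons_contra (prov_in ha) (prov_in hn)); by case: hG.
Qed.

Lemma mcs_and a b : G (And a b) <-> G a /\ G b.
Proof.
split.
  move=> h; split; apply: mcs_prov; apply: (prov_sem1 (prov_in h)) => v /=;
  by case/andP.
move=> [ha hb]; apply: mcs_prov; apply: (prov_sem2 (prov_in ha) (prov_in hb)).
by move=> v /= -> ->.
Qed.

Lemma mcs_imp a b : G (Imp a b) <-> (G a -> G b).
Proof.
rewrite /Imp mcs_neg mcs_and mcs_neg; split.
  by move=> h ha; apply: NNPP => hb; apply: h.
by move=> h [/h].
Qed.

Lemma mcs_iff a b : G (Iff a b) -> (G a <-> G b).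
Proof. by rewrite /Iff mcs_and !mcs_imp. Qed.

End MCS.

Definition cupF (Gm : set F) (Fm : set (set F)) := Gm `|` \bigcup_(X in Fm) X.

Lemma chain_allS (Gm : set F) (Fm : set (set F)) l :
  total_on Fm subset ->
  allS (Gm `|` \bigcup_(X in Fm) X) l ->
  allS Gm l \/ exists X, Fm X /\ allS (Gm `|` X) l.
Proof.
move=> tot; elim: l => [|b l IH] /=; first by left.
move=> [hb /IH [hl|[X [FX hl]]]].
  case: hb => [gb|[Y FY Yb]]; first by left.
  right; exists Y; split => //; split; first by right.
  by apply: allS_sub hl => ? ?; left.
case: hb => [gb|[Y FY Yb]].
  by right; exists X; split => //; split => //; left.
case: (tot _ _ FX FY) => XY.
  right; exists Y; split => //; split; first by right.
  by apply: allS_sub hl => z [?|/XY ?]; [left|right].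
right; exists X; split => //; split => //; by right; apply: XY.
Qed.

Lemma lindenbaum (Gm : set F) : cons Gm -> exists D, Gm `<=` D /\ mcs D.
Proof.
move=> hc.
pose Pr := [set D : set F | cons (Gm `|` D)].
have [A [PA maxA]] : exists A, Pr A /\ forall B, A `<` B -> ~ Pr B.
  apply: Zorn_bigcup => Fm FP tot a [l [hl t]].
  case: (chain_allS tot hl) => [hl'|[X [FX hl']]].
    by apply: (hc a); exists l.
  by apply: (FP X FX a); exists l.
exists (Gm `|` A); split; first by move=> ? ?; left.
split => // a; apply: NNPP => hn.
have ha : ~ (Gm `|` A) a by move=> h; apply: hn; left.
have hna : ~ (Gm `|` A) (Neg a) by move=> h; apply: hn; right.
have Na : ~ Pr (A `|` [set a]).
  apply: maxA; split; first by move=> ? ?; left.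
  move=> h; apply: ha; right; apply: h; by right.
have NNa : ~ Pr (A `|` [set Neg a]).
  apply: maxA; split; first by move=> ? ?; left.
  move=> h; apply: hna; right; apply: h; by right.
move: Na NNa; rewrite /Pr /cons => /existsNP [x1 /NNPP h1] /existsNP [x2 /NNPP h2].
have e1 : prov (Gm `|` A) (Imp a (And x1 (Neg x1))).
  apply: prov_deduct; apply: prov_sub h1 => z [?|[?|?]]; by [left;left|left;right|right].
have e2 : prov (Gm `|` A) (Imp (Neg a) (And x2 (Neg x2))).
  apply: prov_deduct; apply: prov_sub h2 => z [?|[?|?]]; by [left;left|left;right|right].
apply: (PA x1); apply: (prov_sem2 e1 e2) => v; rewrite !tval_imp /=.
by case: (Defs.tval v a); case: (Defs.tval v x1); case: (Defs.tval v x2).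
Qed.

End Prop_logic.


Section Box.
Variables (P Ag : Type).
Notation F := (form P Ag).
Variable B : F -> F.
Hypothesis hK : forall a b, thm (Imp (B (Imp a b)) (Imp (B a) (B b))).
Hypothesis hN : forall a, thm a -> thm (B a).

Lemma box_imps l a ctx : thm (imps ctx (B (imps l a))) ->
  thm (imps ctx (imps (map B l) (B a))).
Proof.
elim: l ctx => [//|b l IH] ctx h /=.
have h2 : thm (imps (ctx ++ [:: B b]) (B (imps l a))).
  apply: (thm_sem2 h (hK b (imps l a))) => v.
  rewrite !tval_imps all_cat /= andbT.
  by case: (all _ ctx); case: (Defs.tval v (B b)); case: (Defs.tval v (B (imps l a)));
     case: (Defs.tval v (B (Imp b (imps l a)))).
have := IH _ h2.
move=> h3; apply: (thm_sem1 h3) => v.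
rewrite !tval_imps all_cat /= tval_imps andbT.
by case: (all _ ctx); case: (Defs.tval v (B b)); case: (all _ (map B l)); case: (Defs.tval v (B a)).
Qed.

Lemma box_exist (x : set F) a : mcs x -> ~ x (B a) ->
  exists y, [/\ mcs y, (forall b, x (B b) -> y b) & ~ y a].
Proof.
move=> mx nxa.
have hc : cons ([set b | x (B b)] `|` [set Neg a]).
  move=> c /prov_deduct h.
  have [l [hl t]] : prov [set b | x (B b)] a.
    apply: (prov_sem1 h) => v; rewrite tval_imp /=.
    by case: (Defs.tval v a); case: (Defs.tval v c).
  apply: nxa; apply: (mcs_prov mx); exists (map B l); split.
    by elim: l hl {t} => [//|b l IH] /= [? /IH].
  by apply: (@box_imps l a [::]); apply: hN.
have [y [sub my]] := lindenbaum hc.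
exists y; split => //; first by move=> b xb; apply: sub; left.
by apply/(mcs_neg my); apply: sub; right.
Qed.

End Box.


Section Sound.
Variables (X : topologicalType) (P Ag : Type) (V : P -> set X).
Notation F := (form P Ag).

Lemma restrict_restrict (th : nfun X Ag) U W :
  restrict (restrict th U) W = restrict th (U `&` W).
Proof.
apply: funext => x; rewrite /restrict.
case: (pselect (W x)) => hW; case: (pselect (U x)) => hU;
  case: (pselect ((U `&` W) x)) => hUW //=.
all: try by exfalso; apply: hUW.
all: try by case: hUW.
all: try by case: (th x).
by case: (th x) => // f; congr Some; apply: funext => i; rewrite setIA.
Qed.

Lemma Dom_restrict (th : nfun X Ag) U y :
  Dom (restrict th U) y <-> U y /\ Dom th y.
Proof.
rewrite /Dom /restrict /=; case: (pselect (U y)) => hU; case: (th y) => //=; split => //;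
 by case.
Qed.

Notation Ia th a := (interior [set y | Dom th y /\ sat V a th y]).

Lemma Ia_Dom (th : nfun X Ag) (a : F) : Ia th a `<=` Dom th.
Proof. by move=> y /interior_subset []. Qed.

Lemma sR1 th (a : F) p x :
  sat V (Ann a (Var p)) th x <-> sat V (Imp (Int a) (Var p)) th x.
Proof.
rewrite /Imp /=; split => [h [h1 h2]|h h1]; first exact: h2 (h h1).
by apply: NNPP => h2; exact: h (conj h1 h2).
Qed.

Lemma sR2 th (a b : F) x :
  sat V (Ann a (Neg b)) th x <-> sat V (Imp (Int a) (Neg (Ann a b))) th x.
Proof.
rewrite /Imp /=; split => [h [h1 h2]|h h1 hb].
  by apply: h2 => h3; apply: (h h1); apply: h3.
by apply: h; split => // /(_ h1).
Qed.

Lemma sR3 th (a b c : F) x :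
  sat V (Ann a (And b c)) th x <-> sat V (And (Ann a b) (Ann a c)) th x.
Proof.
rewrite /=; split => [h|[h1 h2] h3]; last by split; [apply: h1|apply: h2].
by split => /h [].
Qed.

Lemma sR4 th (a b : F) x :
  sat V (Ann a (Int b)) th x <-> sat V (Imp (Int a) (Int (Ann a b))) th x.
Proof.
rewrite /Imp /=.
set I := Ia th a.
have oI : open I by apply: open_interior.
suff E : I x -> (interior [set y | Dom (restrict th I) y /\ sat V b (restrict th I) y] x
   <-> interior [set y | Dom th y /\ (I y -> sat V b (restrict th I) y)] x).
  split => [h [h1 h2]|h h1]; first by apply: h2; apply/(E h1)/h.
  apply/(E h1); apply: NNPP => h2; exact: h (conj h1 h2).
move=> Ix; split.
  apply: interiorS => y [].
  by move/Dom_restrict => [Iy Dy] sb; split => // _.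
have II : interior I = I by apply/interior_id.
move=> h.
have : interior ([set y | Dom th y /\ (I y -> sat V b (restrict th I) y)] `&` I) x.
  by rewrite interiorI II; split.
apply: interiorS => y [[Dy hy] Iy]; split; last by apply: hy.
by apply/Dom_restrict.
Qed.

Lemma sR5 th (a b : F) i x :
  sat V (Ann a (K i b)) th x <-> sat V (Imp (Int a) (K i (Ann a b))) th x.
Proof.
rewrite /Imp /=.
set I := Ia th a.
have E : I x -> restrict th I x =
   match th x with Some f => Some (fun i => f i `&` I) | None => None end.
  by move=> Ix; rewrite /restrict; case: (pselect (I x)).
split => [h [h1 h2] | h h1].
  apply: h2; move: (h h1); rewrite (E h1); case: (th x) => // f hf y fy Iy.
  by apply: hf; split.
rewrite (E h1); case E2: (th x) => [f|] // y [fy Iy].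
apply: NNPP => hn; apply: h; split => //; rewrite E2 => hf; apply: hn.
exact: hf y fy Iy.
Qed.

Lemma sR6 th (a b c : F) x :
  sat V (Ann a (Ann b c)) th x <-> sat V (Ann (Neg (Ann a (Neg (Int b)))) c) th x.
Proof.
rewrite /=.
set I := Ia th a.
set J := interior [set y | Dom (restrict th I) y /\ sat V b (restrict th I) y].
have KE : [set y | Dom th y /\ ~ (I y -> ~ J y)] = I `&` J.
  apply/seteqP; split => y.
    move=> [Dy hn]; split; apply: NNPP => hn2; apply: hn => // /hn2 //.
  move=> [Iy Jy]; split; first exact: Ia_Dom Iy.
  by move/(_ Iy).
rewrite KE.
have -> : interior (I `&` J) = I `&` J.
  by apply/interior_id; apply: openI; apply: open_interior.
rewrite -restrict_restrict.
split => [h [h1 h2]|h h1 h2]; [exact: h h1 h2 | exact: h (conj h1 h2)].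
Qed.

End Sound.


Definition cX (P Ag : Type) := set (form P Ag).

Section Top.
Variables (P Ag : Type).
Notation F := (form P Ag).
Definition RI (x y : set F) := forall a, x (Int a) -> y a.
Definition Rel (x y : cX P Ag) := x = y \/ [/\ mcs x, mcs y & RI x y].
Definition cop : set (set (cX P Ag)) := [set U | forall x y, U x -> Rel x y -> U y].

Lemma copT : cop setT. Proof. by []. Qed.
Lemma copI : setI_closed cop.
Proof. by move=> U W hU hW x y [Ux Wx] r; split; [apply: hU Ux r|apply: hW Wx r]. Qed.
Lemma cop_bigU (I : Type) (f : I -> set (cX P Ag)) : (forall i, cop (f i)) -> cop (\bigcup_i f i).
Proof. by move=> h x y [i _ fx] r; exists i => //; apply: h fx r. Qed.
End Top.

HB.instance Definition _ (P Ag : Type) := gen_eqMixin (cX P Ag).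
HB.instance Definition _ (P Ag : Type) := gen_choiceMixin (cX P Ag).
HB.instance Definition _ (P Ag : Type) :=
  isOpenTopological.Build (cX P Ag) (@copT P Ag) (@copI P Ag) (@cop_bigU P Ag).

Section Canon.
Variables (P Ag : Type).
Notation F := (form P Ag).
Notation X := (cX P Ag).

Lemma openE' (U : set X) : open U <-> cop U.
Proof. by []. Qed.

Lemma Rel_trans (x y z : X) : Rel x y -> Rel y z -> Rel x z.
Proof.
case=> [->//|[mx my rxy]]; case=> [<-|[_ mz ryz]]; first by right.
right; split => // a xa; apply: ryz; apply: rxy.
by apply/(mcs_imp mx): xa; apply: mcs_thm => //; apply: Ax_Int4.
Qed.

Lemma interiorE (A : set X) x : interior A x <-> forall y, Rel x y -> A y.
Proof.
rewrite /interior nbhsE /=; split.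
  by move=> [B [oB Bx] BA] y r; apply: BA; apply: oB Bx r.
move=> h; exists [set y | Rel x y]; last by move=> y /h.
split; last by left.
by move=> y z r1 r2; apply: Rel_trans r1 r2.
Qed.

Definition Ri i (x y : set F) := forall a, x (K i a) -> y a.
Definition cls i (x : X) : set X := [set y | mcs y /\ Ri i x y].
Definition th0 : nfun X Ag :=
  fun x => if pselect (mcs x) then Some (fun i => cls i x) else None.
Definition V0 : P -> set X := fun p x => x (Var p).
Definition Phi0 : set (nfun X Ag) := [set th | exists U, open U /\ th = restrict th0 U].

Lemma Ri_trans i (x y z : X) : mcs x -> Ri i x y -> Ri i y z -> Ri i x z.
Proof.
move=> mx r1 r2 a xa; apply: r2; apply: r1.
by apply/(mcs_imp mx): xa; apply: mcs_thm => //; apply: Ax_4.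
Qed.

Lemma Ri_refl i (x : X) : mcs x -> Ri i x x.
Proof. by move=> mx a; apply/(mcs_imp mx); apply: mcs_thm => //; apply: Ax_T. Qed.

Lemma Ri_eucl i (x y z : X) : mcs x -> mcs y -> Ri i x y -> Ri i x z -> Ri i y z.
Proof.
move=> mx my r1 r2 a ya; apply: NNPP => nz.
have nx : ~ x (K i a) by move/r2.
have h5 : x (K i (Neg (K i a))).
  by apply: ((mcs_imp mx _ _).1 (mcs_thm mx (Ax_5 i a))); apply/(mcs_neg mx).
by move/r1: h5; move/(mcs_neg my).
Qed.

Lemma cls_eq i (x y : X) : mcs x -> mcs y -> Ri i x y -> cls i x = cls i y.
Proof.
move=> mx my r; apply/seteqP; split => z [mz h]; split => //.
  exact: Ri_eucl mx my r h.
exact: Ri_trans mx r h.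
Qed.

Lemma cls_open i (x : X) : mcs x -> open (cls i x).
Proof.
move=> mx; apply/openE' => y z [my r] [<-//|[_ mz ryz]]; split => // a xa.
apply: ryz; have : y (K i a).
  apply: r; by apply/(mcs_imp mx): xa; apply: mcs_thm => //; apply: Ax_4.
by apply/(mcs_imp my); apply: mcs_thm => //; apply: Ax_KInt.
Qed.

Lemma th0_mcs (x : X) : mcs x -> th0 x = Some (fun i => cls i x).
Proof. by rewrite /th0; case: (pselect (mcs x)). Qed.

Lemma Dom_th0 (x : X) : Dom th0 x <-> mcs x.
Proof. by rewrite /Dom /th0 /=; case: (pselect (mcs x)). Qed.

Lemma restrict_th0_some U (x : X) f : restrict th0 U x = Some f ->
  [/\ U x, mcs x & f = fun i => cls i x `&` U].
Proof.
rewrite /restrict /th0; case: (pselect (U x)) => // Ux; case: (pselect (mcs x)) => // mx.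
by case=> <-.
Qed.

Lemma restrict_setT (th : nfun X Ag) : restrict th setT = th.
Proof.
apply: funext => x; rewrite /restrict; destruct (pselect (@setT X x)) as [hx|h]; last by case: h.
by case: (th x) => // f; congr Some; apply: funext => i; rewrite setIT.
Qed.

Lemma Phi0_nbhd : nbhd_function_set Phi0.
Proof.
move=> th [U [oU ->]]; split; last first.
  move=> W oW; exists (U `&` W); split; first exact: openI.
  by rewrite restrict_restrict.
move=> x f /restrict_th0_some [Ux mx ->] i; split.
- by apply: openI => //; apply: cls_open.
- by split => //; split => //; apply: Ri_refl.
- move=> y [[my _] Uy]; rewrite /Dom /restrict /=.
  case: (pselect (U y)) => // hU; by rewrite th0_mcs.
- move=> y g /restrict_th0_some [Uy my ->] [[_ r] _].
  by rewrite (cls_eq mx my r).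
Qed.

Lemma th0_Phi0 : Phi0 th0.
Proof. by exists setT; split; [apply: openT | rewrite restrict_setT]. Qed.

End Canon.


Section Truth.
Variables (P Ag : Type).
Notation F := (form P Ag).
Notation X := (cX P Ag).

Fixpoint cm (f : F) : nat :=
  match f with
  | Var _ => 1
  | Neg a => (cm a).+1
  | And a b => (maxn (cm a) (cm b)).+1
  | K _ a => (cm a).+1
  | Int a => (cm a).+1
  | Ann a b => (cm a + 4) * cm b
  end.

Lemma cm_pos f : 0 < cm f.
Proof. elim: f => //= a ha b hb; rewrite muln_gt0 hb; lia. Qed.

Lemma truth n : forall f : F, cm f < n -> forall x : X, mcs x ->
  (sat (@V0 P Ag) f (@th0 P Ag) x <-> x f).
Proof.
elim: n => [//|n IH] f.
case: f => [p|a|a b|i a|a|a b] /= hn x mx.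
- by [].
- by rewrite (IH a _ x mx) //; split => [/(mcs_neg mx)|/(mcs_neg mx)].
- rewrite (IH a _ x mx) ?(IH b _ x mx) ?(mcs_and mx) //; lia.
- rewrite th0_mcs //; split.
    move=> h; apply: NNPP => nx.
    have [y [my ry ny]] := box_exist (@Ax_K P Ag i) (@R_NecK P Ag i) mx nx.
    by apply: ny; apply/(IH a _ y my) => //; apply: h.
  by move=> h y [my ry]; apply/(IH a _ y my) => //; apply: ry.
- rewrite interiorE; split.
    move=> h; apply: NNPP => nx.
    have [y [my ry ny]] := box_exist (@Ax_IntK P Ag) (@R_NecInt P Ag) mx nx.
    have [_ /(IH a _ y my)] : Dom (@th0 P Ag) y /\ sat (@V0 P Ag) a (@th0 P Ag) y.
      by apply: h; right; split.
    by move=> H; apply: ny; apply: H.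
  move=> h y [<-|[_ my ry]].
    split; first exact/Dom_th0.
    apply/(IH a _ x mx) => //.
    exact: ((mcs_imp mx _ _).1 (mcs_thm mx (Ax_IntT a)) h).
  by split; [exact/Dom_th0 | apply/(IH a _ y my); [|apply: ry]].
have key : forall R, (forall th y, sat (@V0 P Ag) (Ann a b) th y <-> sat (@V0 P Ag) R th y) ->
    thm (Iff (Ann a b) R) -> cm R < n -> (sat (@V0 P Ag) (Ann a b) (@th0 P Ag) x <-> x (Ann a b)).
  move=> R hs ht hc; rewrite hs (IH R hc x mx).
  by apply: iff_sym; apply: (mcs_iff mx (mcs_thm mx ht)).
have pa := cm_pos a.
case: b hn key => [p|b|b c|i b|b|b c] /= hn key.
- apply: (key (Imp (Int a) (Var p))); [move=> th y; exact: sR1|exact: Ax_R1| rewrite /=; lia].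
- apply: (key (Imp (Int a) (Neg (Ann a b)))); [move=> th y; exact: sR2|exact: Ax_R2| rewrite /=; have := cm_pos b; nia].
- apply: (key (And (Ann a b) (Ann a c))); [move=> th y; exact: sR3|exact: Ax_R3| rewrite /=; have := cm_pos b; have := cm_pos c; nia].
- apply: (key (Imp (Int a) (K i (Ann a b)))); [move=> th y; exact: sR5|exact: Ax_R5| rewrite /=; have := cm_pos b; nia].
- apply: (key (Imp (Int a) (Int (Ann a b)))); [move=> th y; exact: sR4|exact: Ax_R4| rewrite /=; have := cm_pos b; nia].
- apply: (key (Ann (Neg (Ann a (Neg (Int b)))) c)); [move=> th y; exact: sR6|exact: Ax_R6| rewrite /=; have := cm_pos b; have := cm_pos c; nia].
Qed.

End Truth.

Unset Implicit Arguments.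
Set Strict Implicit.
Close Scope classical_set_scope.

Theorem mainTheorem2 (Pv : countType) (Ag : finType) (hAg : (0 < #|Ag|)%N)
  (phi : form Pv Ag) :
  topo_valid phi -> thm phi.
Proof.
move=> hv; apply: NNPP => nphi.
have hc : cons [set Neg phi].
  move=> c h.
  have h' : prov (set0 `|` [set Neg phi]) (And c (Neg c)).
    by apply: prov_sub h => z ->; right.
  have [[|b l] [hl t]] := prov_deduct h'; last by case: hl.
  apply: nphi; apply: (thm_sem1 t) => v /=.
  by case: (Defs.tval v phi); case: (Defs.tval v c).
have [D [sub mD]] := lindenbaum hc.
have := hv (cX Pv Ag) (@Phi0 Pv Ag) (@V0 Pv Ag) (@Phi0_nbhd Pv Ag) (@th0 Pv Ag) D
  (@th0_Phi0 Pv Ag) ((Dom_th0 D).2 mD).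
move/(truth (ltnSn (cm phi)) mD) => Dphi.
by have /(mcs_neg mD) := sub (Neg phi) erefl.
Qed.
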